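(* Let $(X,d)$ be a separable metric space, $T\colon X\to X$ a Borel measurable map, $(s_n)_{n\ge1}$ a steady scale sequence, and $\mu,\nu$ two $T$-invariant $T$-ergodic Borel probability measures on $X$. Assume $T$ is a local contraction mod $\nu$. Then $\phi(x,y)=\liminf_{n\to\infty}s_n\,d(T^nx,y)$ is $\mu\times\nu$-almost everywhere constant.
   Context: A scale sequence is a sequence of positive reals $s_n\to\infty$; it is steady if $s_{n+1}/s_n\to1$. The dilation gauge is $D_T(x)=\limsup_{y\to x} d(Ty,Tx)/d(y,x)$ if $x$ is a limit point of $X$ and $D_T(x)=0$ if $x$ is isolated; $T$ is a local contraction mod $\nu$ if $D_T\le1$ $\nu$-a.e. *)

(* Defs.v *)
From HB Require Import structures.
From mathcomp Require Import all_boot all_order all_algebra.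
From mathcomp Require Import all_classical all_reals all_analysis.
Set Implicit Arguments. Unset Strict Implicit. Unset Printing Implicit Defensive.
Import Order.TTheory GRing.Theory Num.Theory numFieldNormedType.Exports.
Local Open Scope classical_set_scope.
Local Open Scope ring_scope.

Definition is_metric (R : realType) (X : Type) (d : X -> X -> R) : Prop :=
  [/\ (forall x y, 0 <= d x y),
      (forall x y, d x y = 0 <-> x = y),
      (forall x y, d x y = d y x) &
      (forall x y z, d x z <= d x y + d y z)].

Definition metric_open (R : realType) (X : Type) (d : X -> X -> R) (U : set X) : Prop :=
  forall x, U x -> exists2 e : R, 0 < e & [set y | d x y < e] `<=` U.

Definition borel_of_metric (R : realType) dX (X : measurableType dX)
    (d : X -> X -> R) : Prop :=
  (@measurable dX X) = <<s metric_open d >>.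

Definition separable_metric (R : realType) (X : Type) (d : X -> X -> R) : Prop :=
  exists D : set X, countable D /\
    forall x (e : R), 0 < e -> exists2 y, D y & d x y < e.

Definition scale_sequence (R : realType) (s : nat -> R) : Prop :=
  (forall n, 0 < s n) /\ s @ \oo --> +oo.

Definition steady_scale_sequence (R : realType) (s : nat -> R) : Prop :=
  scale_sequence s /\ (s n.+1 / s n) @[n --> \oo] --> (1 : R).

Definition limit_point (R : realType) (X : Type) (d : X -> X -> R) (x : X) : Prop :=
  forall r : R, 0 < r -> exists y, 0 < d y x < r.

Definition dilation_gauge (R : realType) (X : Type) (d : X -> X -> R) (T : X -> X)
    (x : X) : \bar R :=
  if `[< limit_point d x >] then
    ereal_inf [set ereal_sup [set ((d (T y) (T x)) / d y x)%:E
                              | y in [set y | 0 < d y x < r]]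
              | r in [set r : R | 0 < r]]
  else 0%E.

Definition local_contraction_mod (R : realType) dX (X : measurableType dX)
    (d : X -> X -> R) (T : X -> X) (nu : {measure set X -> \bar R}) : Prop :=
  {ae nu, forall x, (dilation_gauge d T x <= 1)%E}.

Definition measure_invariant (R : realType) dX (X : measurableType dX) (T : X -> X)
    (mu : {measure set X -> \bar R}) : Prop :=
  forall A, measurable A -> mu (T @^-1` A) = mu A.

Definition measure_ergodic (R : realType) dX (X : measurableType dX) (T : X -> X)
    (mu : {measure set X -> \bar R}) : Prop :=
  forall A, measurable A -> T @^-1` A = A -> mu A = 0%E \/ mu A = 1%E.

Definition phi (R : realType) (X : Type) (d : X -> X -> R) (T : X -> X)
    (s : nat -> R) (x y : X) : \bar R :=
  limn_einf (fun n => (s n * d (iter n T x) y)%:E).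

(* Main.v *)
Require Import Defs.
From HB Require Import structures.
From mathcomp Require Import all_boot all_order all_algebra.
From mathcomp Require Import all_classical all_reals all_analysis.
From mathcomp Require Import measurable_realfun.
From mathcomp Require Import lra.
Import Order.TTheory GRing.Theory Num.Theory numFieldNormedType.Exports.
Local Open Scope classical_set_scope.
Local Open Scope ring_scope.

Section partH.
Set Implicit Arguments. Unset Strict Implicit. Unset Printing Implicit Defensive.
Local Open Scope classical_set_scope.
Local Open Scope ring_scope.
Local Open Scope ereal_scope.

Lemma liminf_supE (R : realType) (u : (\bar R)^nat) :
  limn_einf u = ereal_sup (range (einfs u)).
Proof. by rewrite limn_einf_lim; apply/cvg_lim => //; exact: cvg_einfs_sup. Qed.

Lemma liminf_freq (R : realType) (u : (\bar R)^nat) (M : \bar R) :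
  limn_einf u < M -> forall N, exists2 n, (N <= n)%N & u n < M.
Proof.
move=> lt N; apply: contrapT => nh.
have : M <= einfs u N.
  apply: le_ereal_inf_tmp => _ [n /= Nn <-].
  by rewrite leNgt; apply/negP => unM; apply: nh; exists n.
have : einfs u N <= limn_einf u.
  by rewrite liminf_supE; apply: ereal_sup_ubound; exists N.
move=> h1 h2; have := le_trans h2 h1; by rewrite leNgt lt.
Qed.

Lemma le_liminf (R : realType) (u : (\bar R)^nat) (L : \bar R) :
  (forall M : R, L < M%:E -> forall N, exists2 n, (N <= n)%N & u n <= M%:E) ->
  limn_einf u <= L.
Proof.
move=> h; rewrite liminf_supE; apply: ge_ereal_sup => _ [N _ <-].
have hN (M : R) : L < M%:E -> einfs u N <= M%:E.
  move=> LM; have [n Nn unM] := h M LM N.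
  by apply: le_trans unM; apply: ereal_inf_lbound; exists n.
move: (einfs u N) hN => x hN.
case: L h hN => [l| |] _ hN.
- case: x hN => [r| |] hN.
  + rewrite lee_fin; apply/ler_addgt0Pr => e e0; by rewrite -lee_fin hN ?lte_fin ?ltrDl.
  + move: (hN (l+1)%R); rewrite lte_fin ltrDl ltr01 => /(_ isT).
    by rewrite leNgt ltey.
  + by rewrite leNye.
- by rewrite leey.
- case: x hN => [r| |] hN.
  + move: (hN (r-1)%R (ltNyr _)); rewrite lee_fin => H.
    have : (r - 1 < r)%R by rewrite ltrBlDr ltrDl.
    by rewrite ltNge H.
  + by move: (hN 0%R (ltNyr _)); rewrite leNgt ltey.
  + by [].
Qed.

End partH.

Section partE.
Set Implicit Arguments. Unset Strict Implicit. Unset Printing Implicit Defensive.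
Local Open Scope classical_set_scope.
Local Open Scope ring_scope.
Local Open Scope ereal_scope.

Lemma measurable_iter dX (X : measurableType dX) (T : X -> X) n :
  measurable_fun setT T -> measurable_fun setT (iter n T).
Proof.
move=> mT; elim: n => [|n IH] /=; first exact: measurable_id.
exact: (measurableT_comp mT IH).
Qed.

Lemma switch_nat (P : nat -> Prop) n : P 0%N -> ~ P n ->
  exists k, P k /\ ~ P k.+1.
Proof.
move=> P0; elim: n => [//|n IH] nPn.
have [Pn|nPn'] := pselect (P n); first by exists n.
exact: IH.
Qed.

Lemma null_sym (R : realType) dX (X : measurableType dX)
  (mu : {measure set X -> \bar R}) (A B Z : set X) :
  measurable A -> measurable B -> measurable Z -> mu Z = 0 ->
  A `<=` B `|` Z -> B `<=` A `|` Z -> mu A = mu B.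
Proof.
move=> mA mB mZ Z0 AB BA; apply/eqP; rewrite eq_le; apply/andP; split.
- have h1 : mu A <= mu (B `|` Z).
    by apply: le_measure => //; rewrite inE//; exact: measurableU.
  have h2 : mu (B `|` Z) <= mu B + mu Z := measureU2 mu mB mZ; rewrite Z0 adde0 in h2; exact: le_trans h1 h2.
- have h1 : mu B <= mu (A `|` Z).
    by apply: le_measure => //; rewrite inE//; exact: measurableU.
  have h2 : mu (A `|` Z) <= mu A + mu Z := measureU2 mu mA mZ; rewrite Z0 adde0 in h2; exact: le_trans h1 h2.
Qed.

Lemma ergodic01 (R : realType) dX (X : measurableType dX) (T : X -> X)
  (nu : probability X R) (A N : set X) :
  measurable_fun setT T ->
  (forall S, measurable S -> nu (T @^-1` S) = nu S) ->
  (forall S, measurable S -> T @^-1` S = S -> nu S = 0 \/ nu S = 1) ->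
  measurable A -> measurable N -> nu N = 0 -> A `<=` T @^-1` A `|` N ->
  nu A = 0 \/ nu A = 1.
Proof.
move=> mT inv erg mA mN N0 AN.
have mpre S : measurable S -> measurable (T @^-1` S).
  by move=> mS; rewrite -[_ @^-1` _]setTI; exact: mT.
have mpreI n S : measurable S -> measurable (iter n T @^-1` S).
  by move=> mS; rewrite -[_ @^-1` _]setTI; exact: (measurable_iter n mT measurableT).
have invI n S : measurable S -> nu (iter n T @^-1` S) = nu S.
  elim: n S => [//|n IH] S mS.
  have -> : iter n.+1 T @^-1` S = iter n T @^-1` (T @^-1` S) by [].
  by rewrite IH ?inv//; exact: mpre.
pose A1 := T @^-1` A.
have mA1 : measurable A1 by exact: mpre.
have D0 : nu (A `\` A1) = 0.
  apply/eqP; rewrite -measure_le0 -N0; apply: le_measure; rewrite ?inE//.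
  - exact: measurableD.
  - by move=> x [/AN[]].
have E0 : nu (A1 `\` A) = 0.
  have h1 : nu A1 = nu (A1 `\` A) + nu (A1 `&` A) := measureDI nu mA1 mA.
  have h2 : nu A = nu (A `\` A1) + nu (A `&` A1) := measureDI nu mA mA1.
  rewrite D0 add0e setIC in h2.
  rewrite inv// h2 in h1.
  have fin : nu (A1 `&` A) \is a fin_num.
    rewrite ge0_fin_numE//; apply: (le_lt_trans (probability_le1 _ _)) => //.
      exact: measurableI.
    by rewrite ltry.
  have := congr1 (fun x => x - nu (A1 `&` A)) h1.
  by rewrite /= subee// addeK.
pose B := \bigcup_m \bigcap_(n in [set n | (m <= n)%N]) (iter n T @^-1` A).
have mB : measurable B.
  apply: bigcupT_measurable => m; apply: bigcap_measurableType => n _; exact: mpreI.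
have TB : T @^-1` B = B.
  apply/seteqP; split => x /=.
  - move=> [m _ /= hm]; exists m.+1 => // n /= mn.
    case: n mn => // n mn; rewrite /preimage iterSr; exact: hm.
  - move=> [m _ /= hm]; exists m => // n /= mn.
    have h := hm n.+1 (leqW mn); rewrite /preimage in h; by rewrite /preimage -iterSr.
pose Z := \bigcup_k (iter k T @^-1` (A `\` A1) `|` iter k T @^-1` (A1 `\` A)).
have mZ : measurable Z.
  apply: bigcupT_measurable => k; apply: measurableU; apply: mpreI;
    exact: measurableD.
have Z0 : nu Z = 0.
  apply/(measure_negligible mZ)/negligible_bigcup => k.
  apply/negligibleP; first by apply: measurableU; apply: mpreI; exact: measurableD.
  apply/eqP; rewrite -measure_le0.
  have mD1 : measurable (A `\` A1) by exact: measurableD.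
  have mE1 : measurable (A1 `\` A) by exact: measurableD.
  have h : nu (iter k T @^-1` (A `\` A1) `|` iter k T @^-1` (A1 `\` A)) <=
     nu (iter k T @^-1` (A `\` A1)) + nu (iter k T @^-1` (A1 `\` A)) :=
     measureU2 nu (mpreI k _ mD1) (mpreI k _ mE1).
  by apply: (le_trans h); rewrite !invI// D0 E0 adde0.
have -> : nu A = nu B.
  apply: (null_sym mA mB mZ Z0).
  - move=> x Ax; have [xB|nxB] := pselect (B x); first by left.
    right.
    have : ~ (forall n, A (iter n T x)).
      by move=> h; apply: nxB; exists 0%N => // n _; exact: h.
    move=> /existsNP [n nAn].
    have [k [Pk nPk]] := @switch_nat (fun n => A (iter n T x)) n Ax nAn.
    exists k => //; left; split => //.
  - move=> x [m _ /= hm]; have [Ax|nAx] := pselect (A x); first by left.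
    right.
    have [k [Pk nPk]] := @switch_nat (fun n => ~ A (iter n T x)) m nAx
      (fun h => h (hm m (leqnn m))).
    exists k => //; right; split => //.
    exact: (contrapT nPk).
exact: erg.
Qed.

End partE.

Section partM.
Set Implicit Arguments. Unset Strict Implicit. Unset Printing Implicit Defensive.
Local Open Scope classical_set_scope.
Local Open Scope ring_scope.

Lemma ball_open (R : realType) (X : Type) (d : X -> X -> R) z (a : R) :
  is_metric d -> metric_open d [set x | d x z < a].
Proof.
move=> [d0 dE dC dT] x /= xa; exists (a - d x z); first by rewrite subr_gt0.
move=> y /= hy; apply: (le_lt_trans (dT y x z)).
by rewrite dC -ltrBrDr.
Qed.

Lemma meas_dz (R : realType) dX (X : measurableType dX) (d : X -> X -> R) z :
  is_metric d -> borel_of_metric d -> measurable_fun setT (fun x => d x z).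
Proof.
move=> md hB; apply: (measurability _ (measurable_realfun.RGenInftyO.measurableE R)) => //.
move=> _ [_ [a ->] <-]; rewrite setTI.
have -> : (fun x => d x z) @^-1` `]-oo, a[ = [set x | d x z < a].
  by apply/seteqP; split => x /=; rewrite in_itv.
rewrite hB; apply: sub_sigma_algebra; exact: ball_open.
Qed.

Lemma meas_ball (R : realType) dX (X : measurableType dX) (d : X -> X -> R) z a :
  is_metric d -> borel_of_metric d -> measurable [set x | d x z < a].
Proof. by move=> md hB; rewrite hB; apply: sub_sigma_algebra; exact: ball_open. Qed.

Lemma meas_d (R : realType) dX (X : measurableType dX) (d : X -> X -> R) :
  is_metric d -> separable_metric d -> borel_of_metric d ->
  measurable_fun setT (fun p : X * X => d p.1 p.2).
Proof.
move=> md [D [cD dD]] hB; have [d0 dE dC dT] := md.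
pose U := {z : X | D z}.
have cU : countable [set: U].
  move/countable_injP: cD => [f finj]; apply/countable_injP.
  exists (fun u => f (sval u)) => -[u Du] [v Dv] _ _ /= h.
  have e : u = v by apply: finj; rewrite ?inE.
  subst v; congr exist; exact: Prop_irrelevance.
apply: (measurability _ (measurable_realfun.RGenInftyO.measurableE R)) => //.
move=> _ [_ [a ->] <-]; rewrite setTI.
have -> : (fun p : X * X => d p.1 p.2) @^-1` `]-oo, a[ =
    \bigcup_(u : U) \bigcup_(r : rat)
      ([set x | d x (sval u) < ratr r] `*` [set y | d y (sval u) < a - ratr r]).
  apply/seteqP; split => -[x y] /=.
  - rewrite in_itv /= => xya.
    pose e := (a - d x y) / 3.
    have e0 : 0 < e by rewrite /e divr_gt0 // subr_gt0.
    have [z Dz xz] := dD x e e0.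
    have /rat_in_itvoo[r] : d x z < e by [].
    rewrite in_itv /= => /andP[r1 r2].
    exists (exist _ z Dz) => //; exists r => //; split => //=.
    have := dT y x z; rewrite (dC y x) => h.
    have : e * 3 = a - d x y by rewrite /e mulfVK // pnatr_eq0.
    move=> he; lra.
  - move=> [[z Dz] _ [r _ /= [h1 h2]]].
    rewrite in_itv /=.
    have := dT x z y; rewrite (dC z y) => h.
    lra.
apply: countable_bigcupT_measurable => // u.
apply: bigcupT_measurable_rat => r.
by apply: measurableX; apply: meas_ball.
Qed.

Lemma meas_iter dX (X : measurableType dX) (T : X -> X) n :
  measurable_fun setT T -> measurable_fun setT (iter n T).
Proof.
move=> mT; elim: n => [|n IH] /=; first exact: measurable_id.
exact: (measurableT_comp mT IH).
Qed.

Lemma meas_phi (R : realType) dX (X : measurableType dX) (d : X -> X -> R)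
  (T : X -> X) (s : nat -> R) :
  is_metric d -> separable_metric d -> borel_of_metric d ->
  measurable_fun setT T ->
  measurable_fun setT ((fun p : X * X => phi d T s p.1 p.2) : X * X -> \bar R).
Proof.
move=> md sd hB mT.
have mdd := meas_d md sd hB.
rewrite /phi /limn_einf.
apply: measurableT_comp => //.
apply: measurable_fun_limn_esup => n /=.
have mg : measurable_fun setT (fun x : X * X => d (iter n T x.1) x.2).
  exact: (measurableT_comp mdd (measurable_fun_pair
    (measurableT_comp (meas_iter n mT) measurable_fst) measurable_snd)).
have -> : (fun p : X * X => - (s n * d (iter n T p.1) p.2)%:E)%E =
   EFin \o (fun p : X * X => - (s n * d (iter n T p.1) p.2)).
  by apply/funext => p; rewrite /= EFinN.
apply/measurable_EFinP; apply: measurable_funN; exact: measurable_funM.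
Qed.

End partM.

Section partP.
Set Implicit Arguments. Unset Strict Implicit. Unset Printing Implicit Defensive.
Local Open Scope classical_set_scope.
Local Open Scope ring_scope.

Lemma liminf_ge0 (R : realType) (u : (\bar R)^nat) :
  (forall n, (0 <= u n)%E) -> (0 <= limn_einf u)%E.
Proof.
move=> u0; rewrite liminf_supE; apply: (@le_trans _ _ (einfs u 0%N)).
  by apply: le_ereal_inf_tmp => _ [n _ <-].
by apply: ereal_sup_ubound; exists 0%N.
Qed.

Lemma phi_ge0 (R : realType) (X : Type) (d : X -> X -> R) T s x y :
  is_metric d -> (forall n, 0 < s n) -> (0 <= phi d T s x y)%E.
Proof.
move=> [d0 _ _ _] s0; apply: liminf_ge0 => n.
by rewrite lee_fin mulr_ge0// ltW.
Qed.

Lemma between (R : realType) (L : \bar R) (M : R) :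
  (0 <= L)%E -> (L < M%:E)%E -> exists t : R, [/\ 0 < t, (L < t%:E)%E & t < M].
Proof.
case: L => [l| |] //; rewrite lee_fin lte_fin => l0 lM.
exists ((l + M) / 2); split; rewrite ?lte_fin; lra.
Qed.

Lemma phiT_le (R : realType) (X : Type) (d : X -> X -> R) T s x y :
  is_metric d -> steady_scale_sequence s ->
  (phi d T s (T x) y <= phi d T s x y)%E.
Proof.
move=> md [[s0 sy] sr]; have [d0 _ _ _] := md.
have L0 := phi_ge0 T x y md s0.
apply: le_liminf => M LM N.
have [t [t0 Lt tM]] := between L0 LM.
have M0 : 0 < M by lra.
have tM1 : t / M < 1 by rewrite ltr_pdivrMr // mul1r.
have [N0 _ hN0] := cvgr_gt _ sr _ tM1.
have [m hm um] := liminf_freq Lt (maxn N N0).+1.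
case: m hm um => // n hn un.
exists n; first exact: leq_trans (leq_maxl _ _) hn.
rewrite -iterSr lee_fin; rewrite lte_fin in un.
have := hN0 n (leq_trans (leq_maxr _ _) hn) => /=.
rewrite ltr_pdivrMr // mulrAC ltr_pdivlMr // => r.
set D := d _ y in un *.
have D0 : 0 <= D by exact: d0.
have h1 : (t * s n) * D <= (s n.+1 * M) * D by apply: ler_wpM2r => //; exact: ltW.
have h2 : M * (s n.+1 * D) < M * t by rewrite ltr_pM2l.
have s0n := s0 n.
nra.
Qed.

Lemma contr (R : realType) (X : Type) (d : X -> X -> R) T y (rho : R) :
  is_metric d -> (dilation_gauge d T y <= 1)%E -> 1 < rho ->
  exists2 r : R, 0 < r & forall z, d z y < r -> d (T z) (T y) <= rho * d z y.
Proof.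
move=> md hD r1; have [d0 dE dC dT] := md.
have rho0 : 0 < rho by lra.
have zero z : d z y = 0 -> d (T z) (T y) <= rho * d z y.
  move=> /dE ->; rewrite (proj2 (dE y y) erefl) mulr0.
  by rewrite (proj2 (dE (T y) (T y)) erefl).
move: hD; rewrite /dilation_gauge; case: asboolP => [lp|nlp] hD.
- have hr1 : (1 < rho%:E)%E by rewrite lte_fin.
  move: (le_lt_trans hD hr1) => /ereal_inf_lt [_ [r r0 <-] hr]; exists r => // z zr.
  have [z0|zpos] : d z y = 0 \/ 0 < d z y.
    by have := d0 z y; rewrite le_eqVlt => /orP[/eqP ->|->]; [left|right].
  + exact: zero.
  + have : ((d (T z) (T y) / d z y)%:E < rho%:E)%E.
      apply: le_lt_trans hr; apply: ereal_sup_ubound; exists z => //=.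
      by apply/andP; split.
    rewrite lte_fin ltr_pdivrMr // => h.
    exact: ltW.
- have [r /not_implyP [r0 h]] : exists r : R, ~ (0 < r -> exists z, 0 < d z y < r).
    by apply/existsNP => h; apply: nlp => r; exact: h.
  exists r => // z zr; apply: zero.
  have := d0 z y; rewrite le_eqVlt => /orP[/eqP <-//|zpos].
  by exfalso; apply: h; exists z; rewrite zpos zr.
Qed.

Lemma phiTy_le (R : realType) (X : Type) (d : X -> X -> R) T s x y :
  is_metric d -> steady_scale_sequence s -> (dilation_gauge d T y <= 1)%E ->
  (phi d T s x (T y) <= phi d T s x y)%E.
Proof.
move=> md [[s0 sy] sr] hD; have [d0 dE dC dT] := md.
have L0 := phi_ge0 T x y md s0.
apply: le_liminf => M LM N.
have [t1 [t10 Lt t1M]] := between L0 LM.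
pose t2 := (t1 + M) / 2.
have t12 : t1 < t2 by rewrite /t2; lra.
have t2M : t2 < M by rewrite /t2; lra.
have t20 : 0 < t2 by lra.
pose rho1 := t2 / t1; pose rho2 := M / t2.
have r1 : 1 < rho1 by rewrite /rho1 ltr_pdivlMr // mul1r.
have r2 : 1 < rho2 by rewrite /rho2 ltr_pdivlMr // mul1r.
have e1 : rho1 * t1 = t2 by rewrite /rho1 mulfVK // gt_eqF.
have e2 : rho2 * t2 = M by rewrite /rho2 mulfVK // gt_eqF.
have e3 : rho2 * rho1 * t1 = M by rewrite -mulrA e1 e2.
have [r r0 hr] := contr md hD r1.
have [N0 _ hN0] := cvgr_lt _ sr _ r2.
have [N1 _ hN1] := proj1 (cvgryPgt s) sy (t1 / r).
have [m hm um] := liminf_freq Lt (maxn N (maxn N0 N1)).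
exists m.+1.
  by apply: leq_trans (leqnSn _); apply: leq_trans hm; exact: leq_maxl.
rewrite lee_fin; rewrite lte_fin in um.
set D := d (iter m T x) y in um.
have hm0 : s m.+1 / s m < rho2.
  apply: hN0 => /=; apply: leq_trans hm.
  by apply: leq_trans (leq_maxr _ _); exact: leq_maxl.
have hm1 : t1 / r < s m.
  apply: hN1 => /=; apply: leq_trans hm.
  by apply: leq_trans (leq_maxr _ _); exact: leq_maxr.
rewrite ltr_pdivrMr // in hm0.
rewrite ltr_pdivrMr // in hm1.
have D0 : 0 <= D by exact: d0.
have Dr : D < r.
  by rewrite -(ltr_pM2l (s0 m)); apply: lt_trans um _.
have c := hr (iter m T x) Dr.
rewrite /= -/D.
set D' := d (T (iter m T x)) (T y) in c *.
have h1 : s m.+1 * D' <= s m.+1 * (rho1 * D) by rewrite ler_wpM2l // ltW.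
have h2 : s m.+1 * (rho1 * D) <= (rho2 * s m) * (rho1 * D).
  have p1D : 0 <= rho1 * D by apply: mulr_ge0 => //; lra.
  by apply: ler_wpM2r => //; exact: ltW hm0.
have p21 : 0 < rho2 * rho1 by apply: mulr_gt0; lra.
have h3 : (rho2 * rho1) * (s m * D) <= (rho2 * rho1) * t1.
  by apply: ler_wpM2l; [exact: ltW p21 | exact: ltW um].
lra.
Qed.

End partP.
Unset Implicit Arguments. Set Strict Implicit.
Local Open Scope classical_set_scope.
Local Open Scope ring_scope.

Lemma rat_dense_ereal (R : realType) (a b : \bar R) :
  (a < b)%E -> exists r : rat, (a < (ratr r)%:E < b)%E.
Proof.
case: a => [x| |]; case: b => [y| |] //= ab.
- rewrite lte_fin in ab; have /rat_in_itvoo[r] := ab.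
  by rewrite in_itv /= => /andP[h1 h2]; exists r; rewrite !lte_fin h1 h2.
- have /rat_in_itvoo[r] : x < x + 1 by lra.
  by rewrite in_itv /= => /andP[h1 h2]; exists r; rewrite lte_fin h1 ltry.
- have /rat_in_itvoo[r] : y - 1 < y by lra.
  by rewrite in_itv /= => /andP[h1 h2]; exists r; rewrite lte_fin h2 ltNyr.
- by exists 0; rewrite ltNyr ltry.
Qed.

Section zero_one.
Context (R : realType) (dX : measure_display) (X : measurableType dX)
    (d : X -> X -> R) (T : X -> X) (s : nat -> R)
    (mu nu : probability X R).
Hypotheses (md : is_metric d) (sd : separable_metric d) (hB : borel_of_metric d)
  (mT : measurable_fun setT T) (ss : steady_scale_sequence s)
  (invmu : measure_invariant T mu) (ergmu : measure_ergodic T mu)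
  (invnu : measure_invariant T nu) (ergnu : measure_ergodic T nu)
  (lc : local_contraction_mod d T nu).

Let E (q : R) := [set p : X * X | (phi d T s p.1 p.2 < q%:E)%E].

Let mE q : measurable (E q).
Proof.
have := @meas_phi _ _ _ d T s md sd hB mT measurableT _ (emeasurable_itv `]-oo, q%:E[).
rewrite setTI; congr measurable; apply/seteqP; split => p /=;
  by rewrite in_itv.
Qed.

Lemma zero_one_E q : ((mu \x nu) (E q) = 0 \/ (mu \x nu) (E q) = 1)%E.
Proof.
have [N0 [mN0 N00 sN0]] := lc.
pose g x := nu (xsection (E q) x).
have mxs x : measurable (xsection (E q) x) by exact: measurable_xsection.
have xsE x : xsection (E q) x = [set y | (phi d T s x y < q%:E)%E].
  by apply/seteqP; split => y; rewrite /xsection /= inE.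
have g01 x : g x = 0%E \/ g x = 1%E.
  rewrite /g; apply: (@ergodic01 _ _ _ T nu _ N0) => //.
  rewrite xsE => y /= hy; have [yN|yN] := pselect (N0 y); [by right|left].
  have hD : (dilation_gauge d T y <= 1)%E.
    by apply: contrapT => h; apply: yN; apply: sN0.
  exact: le_lt_trans (phiTy_le x md ss hD) hy.
have mg : measurable_fun setT g by exact: measurable_fun_xsection.
pose S := [set x | g x = 1%E].
have mS : measurable S.
  have := mg measurableT [set 1%E] (emeasurable_set1 _).
  by rewrite setTI.
have ST : S `<=` T @^-1` S `|` set0.
  move=> x Sx; left; rewrite /S /=.
  have : (g x <= g (T x))%E.
    apply: le_measure; rewrite ?inE //.
    rewrite !xsE => y /= h; exact: le_lt_trans (phiT_le T x y md ss) h.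
  rewrite Sx => h; apply/eqP; rewrite eq_le h andbT.
  exact: probability_le1.
have n01 : (0 : \bar R) <> 1%E.
  by move=> /(congr1 fine)/eqP; rewrite /= eq_sym oner_eq0.
have gE : g = fun x => (\1_S x)%:E.
  apply/funext => x; rewrite indicE; have [h|h] := g01 x.
  - by rewrite memNset // /S /= h.
  - by rewrite mem_set.
have -> : (mu \x nu)%E (E q) = (\int[mu]_x g x)%E by [].
rewrite gE integral_indic // setIT.
have [mS0|mS1] := @ergodic01 _ _ _ T mu S set0 mT invmu ergmu mS measurable0 (measure0 _) ST.
- by left.
- by right.
Qed.

End zero_one.

Theorem theorem6p5 (R : realType) (dX : measure_display) (X : measurableType dX)
    (d : X -> X -> R) (T : X -> X) (s : nat -> R)
    (mu nu : probability X R) :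
  is_metric d -> separable_metric d -> borel_of_metric d ->
  measurable_fun setT T ->
  steady_scale_sequence s ->
  measure_invariant T mu -> measure_ergodic T mu ->
  measure_invariant T nu -> measure_ergodic T nu ->
  local_contraction_mod d T nu ->
  exists c : \bar R,
    {ae (mu \x nu)%E, forall z : X * X, phi d T s z.1 z.2 = c}.
Proof.
move=> md sd hB mT ss invmu ergmu invnu ergnu lc.
pose E (q : R) := [set p : X * X | (phi d T s p.1 p.2 < q%:E)%E].
have Z01 q : ((mu \x nu) (E q) = 0 \/ (mu \x nu) (E q) = 1)%E :=
  @zero_one_E R dX X d T s mu nu md sd hB mT ss invmu ergmu invnu ergnu lc q.
have mE q : measurable (E q).
  have := @meas_phi _ _ _ d T s md sd hB mT measurableT _ (emeasurable_itv `]-oo, q%:E[).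
  rewrite setTI; congr measurable; apply/seteqP; split => p /=;
    by rewrite in_itv.
have n01 : (0 : \bar R) <> 1%E.
  by move=> /(congr1 fine)/eqP; rewrite /= eq_sym oner_eq0.
pose c := ereal_inf [set q%:E | q in [set q : R | (mu \x nu)%E (E q) = 1%E]].
exists c.
pose B (r : rat) := if (mu \x nu)%E (E (ratr r)) == 0%E then E (ratr r)
                    else ~` E (ratr r).
have mB r : measurable (B r).
  by rewrite /B; case: ifP => _; [exact: mE | exact: measurableC].
have B0 r : (mu \x nu)%E (B r) = 0%E.
  rewrite /B; case: ifPn => [/eqP //|h].
  have h1 : (mu \x nu)%E (E (ratr r)) = 1%E.
    by case: (Z01 (ratr r)) h => ->; rewrite ?eqxx.
  have hc : ((mu \x nu)%E (~` E (ratr r)) = 1 - (mu \x nu)%E (E (ratr r)))%E :=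
    probability_setC _ (mE _).
  by rewrite hc h1 subee.
pose B' n := if @unpickle rat n is Some r then B r else set0.
have negB : (mu \x nu)%E.-negligible (\bigcup_n B' n).
  apply: negligible_bigcup => n; rewrite /B'; case: unpickle => [r|].
  - by apply/negligibleP => //; exact: B0.
  - exact: negligible_set0.
apply: (negligibleS _ negB) => z /= hz.
have [lt|gt] : (phi d T s z.1 z.2 < c)%E \/ (c < phi d T s z.1 z.2)%E.
  by move/eqP: hz; rewrite neq_lt => /orP.
- have [r /andP[h1 h2]] := rat_dense_ereal _ _ _ lt.
  exists (pickle r); first by [].
  rewrite /B' pickleK /B.
  have h0 : (mu \x nu)%E (E (ratr r)) = 0%E.
    case: (Z01 (ratr r)) => // h; exfalso.
    have : (c <= (ratr r)%:E)%E by apply: ereal_inf_lbound; exists (ratr r).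
    by rewrite leNgt h2.
  by rewrite h0 eqxx.
- have [r /andP[h1 h2]] := rat_dense_ereal _ _ _ gt.
  exists (pickle r); first by [].
  rewrite /B' pickleK /B.
  have [_ [q Pq <-] qr] := ereal_inf_lt h1.
  have h1' : (mu \x nu)%E (E (ratr r)) = 1%E.
    apply/eqP; rewrite eq_le probability_le1 //= -[X in (X <= _)%E]Pq.
    apply: le_measure; rewrite ?inE //.
    by move=> p /= hp; apply: lt_trans hp qr.
  rewrite h1'.
  have -> : ((1%E : \bar R) == 0%E) = false by apply/eqP => /esym; exact: n01.
  by rewrite /= => hE; have := lt_trans hE h2; rewrite ltxx.
Qed.
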